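(* Let $T$ and $k$ be positive integers and let $p_1,\dots,p_k\in(0,1]$, with $q_i=1-p_i$. Consider blocks $i=1,\dots,k$, each of $T$ slots. In block $i$ the slot success indicators are i.i.d. Bernoulli$(p_i)$, and the blocks are independent. Block $0$ is a virtual block that is always successful and ends with a success; accordingly set $p_0=1$ and $q_0=0$. Let $Z(i)$ indicate that block $i$ contains at least one success. On the event $Z(k)=1$, define the following quantities: - $\kappa\in\{1,\dots,k\}$, such that $k-\kappa$ is the most recent block before $k$ with $Z(k-\kappa)=1$; - $W_{k-\kappa}$, the number of failure slots after the last success in block $k-\kappa$; - $X_k$, the number of failure slots before the first success in block $k$. The peak latency of the first successfully received input in block $k$ is $$\mathcal{L}^{\rm P}_{\kappa,k}=T(\kappa-1)+W_{k-\kappa}+X_k+1.$$ Then $\Theta^{\rm pl}_k:=\mathbb{E}[\mathcal{L}^{\rm P}_{\kappa,k}\mid Z(k)=1]$ equals $$\sum_{\kappa=1}^{k}(1-q_{k-\kappa}^T)\Big[\prod_{i=k-\kappa+1}^{k-1}q_i^T\Big]\Big[\frac{q_{k-\kappa}}{p_{k-\kappa}}+T\kappa\Big]-T\sum_{\kappa=1}^{k}\Big[\prod_{i=k-\kappa}^{k-1}q_i^T\Big]-T+\Big(\frac{q_k}{p_k}-\frac{Tq_k^T}{1-q_k^T}\Big)+1.$$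
   Context: Empty products equal $1$. The block-$0$ convention means block $0$ is always treated as a successful block, so $\kappa=k$ corresponds to no successful block among $1,\dots,k-1$. *)

(* Defs.v *)
From mathcomp Require Import all_boot all_order all_algebra.
Set Implicit Arguments. Unset Strict Implicit. Unset Printing Implicit Defensive.
Import Order.TTheory GRing.Theory Num.Theory.
Local Open Scope ring_scope.

Section Defs.
Variable R : realFieldType.

Definition pb (p : nat -> R) (i : nat) : R := if i == 0%N then 1 else p i.
Definition qb (p : nat -> R) (i : nat) : R := 1 - pb p i.

(* Outcome: success indicator of slot j in block i, for blocks 0..k
   (block 0 is the virtual block, distributed as Bernoulli(p_0 = 1)). *)
Definition outcome (k T : nat) := {ffun 'I_k.+1 * 'I_T -> bool}.

Definition weight (p : nat -> R) (k T : nat) (w : outcome k T) : R :=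
  \prod_(s : 'I_k.+1 * 'I_T) (if w s then pb p s.1 else qb p s.1).

Definition blk (k T : nat) (w : outcome k T) (i : nat) : seq bool :=
  [seq w (inord i, j) | j <- enum 'I_T].

Definition Zb (k T : nat) (w : outcome k T) (i : nat) : bool :=
  [exists j : 'I_T, w (inord i, j)].

Definition Xb (k T : nat) (w : outcome k T) (i : nat) : nat :=
  find id (blk w i).

Definition Wb (k T : nat) (w : outcome k T) (i : nat) : nat :=
  find id (rev (blk w i)).

(* kappa: the least m in 1..k-1 with Z(k-m), and k if there is none
   (block 0 is always treated as successful). *)
Definition kappa (k T : nat) (w : outcome k T) : nat :=
  (find id [seq Zb w (k - m) | m <- iota 1 k.-1]).+1.

Definition peak_latency (k T : nat) (w : outcome k T) : nat :=
  (T * (kappa w).-1 + Wb w (k - kappa w) + Xb w k + 1)%N.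

Definition Theta_pl (p : nat -> R) (k T : nat) : R :=
  (\sum_(w : outcome k T | Zb w k) weight p w * (peak_latency w)%:R) /
  (\sum_(w : outcome k T | Zb w k) weight p w).

End Defs.

(* Main.v *)
Require Import Defs.
From mathcomp Require Import all_boot all_order all_algebra.
From mathcomp Require Import zify ring lra.
Import Order.TTheory GRing.Theory Num.Theory.
Set Implicit Arguments. Unset Strict Implicit. Unset Printing Implicit Defensive.
Local Open Scope ring_scope.


Section Block.
Variable R : realFieldType.
Variable T : nat.

Definition bw (a : R) (b : {ffun 'I_T -> bool}) : R :=
  \prod_j (if b j then a else 1 - a).

Lemma slotE (a : R) (h : 'I_T -> bool -> R) :
  \sum_(b : {ffun 'I_T -> bool}) bw a b * \prod_j h j (b j) =
  \prod_j (a * h j true + (1 - a) * h j false).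
Proof.
rewrite (eq_bigr (fun b : {ffun 'I_T -> bool} => \prod_j ((if b j then a else 1 - a) * h j (b j)))); last first.
  by move=> b _; rewrite /bw big_split.
rewrite -(bigA_distr_bigA (fun j (c : bool) => (if c then a else 1 - a) * h j c)).
by apply: eq_bigr => j _; rewrite big_bool.
Qed.

Lemma E1 (a : R) : \sum_(b : {ffun 'I_T -> bool}) bw a b = 1.
Proof.
transitivity (\sum_(b : {ffun 'I_T -> bool}) bw a b * \prod_(j : 'I_T) (fun _ _ => (1:R)) j (b j)).
  by apply: eq_bigr => b _; rewrite big1_eq mulr1.
by rewrite (slotE a (fun _ _ => 1)); apply: big1 => j _; rewrite !mulr1 subrKC.
Qed.

Lemma Eall (a : R) (P : pred 'I_T) :
  \sum_(b : {ffun 'I_T -> bool}) bw a b * \prod_(j | P j) (~~ b j)%:R =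
  (1 - a) ^+ #|P|.
Proof.
transitivity (\sum_(b : {ffun 'I_T -> bool}) bw a b * \prod_(j : 'I_T) (fun j (c : bool) => if P j then (~~ c)%:R else (1:R)) j (b j)).
  by apply: eq_bigr => b _; rewrite big_mkcond.
rewrite (slotE a (fun j (c : bool) => if P j then (~~ c)%:R else (1:R))) -prodr_const [RHS]big_mkcond.
apply: eq_bigr => j _ /=; rewrite unfold_in /=.
by case: (P j) => /=; rewrite ?mulr0 ?add0r ?mulr1 ?subrKC.
Qed.


Definition Zf (b : {ffun 'I_T -> bool}) : bool := [exists j, b j].
Definition Xf (b : {ffun 'I_T -> bool}) : nat := find id [seq b j | j <- enum 'I_T].
Definition Wf (b : {ffun 'I_T -> bool}) : nat := find id (rev [seq b j | j <- enum 'I_T]).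

Lemma notZ_prod b : (~~ Zf b)%:R = \prod_j (~~ b j)%:R :> R.
Proof.
case: (boolP (Zf b)) => [/existsP [j bj] | /existsPn nb].
  by rewrite (bigD1 j) //= bj mul0r.
by rewrite big1 // => j _; rewrite (negbTE (nb j)).
Qed.

Lemma ENZ (a : R) : \sum_(b : {ffun 'I_T -> bool}) bw a b * (~~ Zf b)%:R = (1 - a) ^+ T.
Proof.
under eq_bigr => b _ do rewrite notZ_prod.
have := Eall a xpredT.
rewrite card_ord => <-; apply: eq_bigr => b _; congr (_ * _).
Qed.

Lemma EZ (a : R) : \sum_(b : {ffun 'I_T -> bool}) bw a b * (Zf b)%:R = 1 - (1 - a) ^+ T.
Proof.
have H : \sum_(b : {ffun 'I_T -> bool}) bw a b * (Zf b)%:R +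
         \sum_(b : {ffun 'I_T -> bool}) bw a b * (~~ Zf b)%:R = 1.
  rewrite -[RHS](E1 a) -big_split /=; apply: eq_bigr => b _.
  by case: (Zf b); rewrite /= ?mulr1n ?mulr0n ?mulr1 ?mulr0 ?addr0 ?add0r.
by move: H; rewrite ENZ => H; rewrite -[X in _ = X - _]H addrK.
Qed.

Lemma find_take (s : seq bool) : find id s = (\sum_(x < size s) ~~ has id (take x.+1 s))%N.
Proof.
elim: s => [|c s IH] /=; first by rewrite big_ord0.
rewrite big_ord_recl /=.
case: c => /=; first by rewrite big1.
by rewrite take0 /= IH; apply: congr1; apply: eq_bigr => i _; rewrite /bump leq0n.
Qed.

Lemma mem_take_ord (j : 'I_T) n : (j \in take n (enum 'I_T)) = (j < n)%N.
Proof.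
rewrite -(mem_map val_inj) map_take val_enum_ord take_iota mem_iota /=.
have := ltn_ord j; lia.
Qed.

Lemma mem_take_rev_ord (j : 'I_T) n : (n <= T)%N ->
  (j \in take n (rev (enum 'I_T))) = (T - n <= j)%N.
Proof.
move=> nT.
rewrite -(mem_map val_inj) map_take map_rev val_enum_ord take_rev size_iota drop_iota mem_rev mem_iota /=.
have := ltn_ord j; lia.
Qed.

Lemma cardle x : (x < T)%N -> #|[pred j : 'I_T | (j <= x)%N]| = x.+1.
Proof.
move=> xT.
rewrite -sum1_card.
have := @big_ord_widen_cond nat 0%N addn x.+1 T xpredT (fun _ => 1%N) xT.
move=> H.
transitivity (\sum_(i < T | true && (i < x.+1)%N) 1)%N; first by apply: eq_bigl.
by rewrite -H sum1_card; exact: card_ord.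
Qed.

Lemma cardge x : (x < T)%N -> #|[pred j : 'I_T | (T - x.+1 <= j)%N]| = x.+1.
Proof.
move=> xT.
rewrite -sum1_card (reindex_inj rev_ord_inj) /= -[in RHS](cardle xT) -[in RHS]sum1_card.
apply: eq_bigl => j; rewrite !inE /=; have := ltn_ord j; lia.
Qed.


Lemma hasnot_prod (P : pred 'I_T) (b : pred 'I_T) s :
  (forall j, (j \in s) = P j) -> (~~ has b s)%:R = \prod_(j | P j) (~~ b j)%:R :> R.
Proof.
move=> Hs; case: (boolP (has b s)) => [/hasP [j js bj]|/hasPn nb].
  have Pj : P j by rewrite -Hs.
  by rewrite (bigD1 j Pj) /= bj mul0r.
by rewrite big1 // => j Pj; rewrite (negbTE (nb j _)) // Hs.
Qed.

Lemma Xsum b : (Xf b)%:R = \sum_(x < T) \prod_(j : 'I_T | (j <= x)%N) (~~ b j)%:R :> R.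
Proof.
rewrite /Xf find_take size_map size_enum_ord natr_sum; apply: eq_bigr => x _.
rewrite -map_take has_map; apply: hasnot_prod => j; exact: mem_take_ord.
Qed.

Lemma Wsum b : (Wf b)%:R = \sum_(x < T) \prod_(j : 'I_T | (T - x.+1 <= j)%N) (~~ b j)%:R :> R.
Proof.
rewrite /Wf -map_rev find_take size_map size_rev size_enum_ord natr_sum; apply: eq_bigr => x _.
rewrite -map_take has_map; apply: hasnot_prod => j; apply: mem_take_rev_ord; exact: ltn_ord.
Qed.

Lemma EX (a : R) : \sum_(b : {ffun 'I_T -> bool}) bw a b * (Xf b)%:R = \sum_(x < T) (1 - a) ^+ x.+1.
Proof.
under eq_bigr => b _ do rewrite Xsum mulr_sumr.
rewrite exchange_big; apply: eq_bigr => x _.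
rewrite (Eall a (fun j : 'I_T => (j <= x)%N)); congr (_ ^+ _); exact: cardle.
Qed.

Lemma EW (a : R) : \sum_(b : {ffun 'I_T -> bool}) bw a b * (Wf b)%:R = \sum_(x < T) (1 - a) ^+ x.+1.
Proof.
under eq_bigr => b _ do rewrite Wsum mulr_sumr.
rewrite exchange_big; apply: eq_bigr => x _.
rewrite (Eall a (fun j : 'I_T => (T - x.+1 <= j)%N)); congr (_ ^+ _); exact: cardge.
Qed.

Lemma ZX b : (Zf b)%:R * (Xf b)%:R = (Xf b)%:R - T%:R * (~~ Zf b)%:R :> R.
Proof.
case: (boolP (Zf b)) => Zb; first by rewrite /= mul1r mulr0 subr0.
rewrite /Xf hasNfind; last first.
  rewrite has_map; apply/hasPn => j _; move/existsPn: Zb => Zb; exact: Zb j.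
by rewrite size_map size_enum_ord /= mul0r mulr1 subrr.
Qed.

Lemma ZW b : (Zf b)%:R * (Wf b)%:R = (Wf b)%:R - T%:R * (~~ Zf b)%:R :> R.
Proof.
case: (boolP (Zf b)) => Zb; first by rewrite /= mul1r mulr0 subr0.
rewrite /Wf hasNfind; last first.
  rewrite has_rev has_map; apply/hasPn => j _; move/existsPn: Zb => Zb; exact: Zb j.
by rewrite size_rev size_map size_enum_ord /= mul0r mulr1 subrr.
Qed.

Lemma EZX (a : R) : \sum_(b : {ffun 'I_T -> bool}) bw a b * ((Zf b)%:R * (Xf b)%:R) =
  \sum_(x < T) (1 - a) ^+ x.+1 - T%:R * (1 - a) ^+ T.
Proof.
under eq_bigr => b _ do rewrite ZX mulrBr.
rewrite sumrB EX; congr (_ - _).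
under eq_bigr => b _ do rewrite mulrCA.
by rewrite -mulr_sumr ENZ.
Qed.

Lemma EZW (a : R) : \sum_(b : {ffun 'I_T -> bool}) bw a b * ((Zf b)%:R * (Wf b)%:R) =
  \sum_(x < T) (1 - a) ^+ x.+1 - T%:R * (1 - a) ^+ T.
Proof.
under eq_bigr => b _ do rewrite ZW mulrBr.
rewrite sumrB EW; congr (_ - _).
under eq_bigr => b _ do rewrite mulrCA.
by rewrite -mulr_sumr ENZ.
Qed.

End Block.


Lemma find_eq (s : seq bool) n : (n <= size s)%N ->
  (find id s == n) = nth true s n && all (fun i => ~~ nth false s i) (iota 0 n).
Proof.
elim: s n => [|c s IH] [|n] //=; first by case: c.
move=> Hn; have -> : iota 1 n = map (addn 1) (iota 0 n) by rewrite -iotaDl.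
rewrite all_map; case: c => /=; first by rewrite andbF.
rewrite eqSS (IH n Hn).
by congr (_ && _); apply: eq_all => i /=; rewrite add1n.
Qed.

Lemma prod_shape (R : realFieldType) (a k : nat) (H : nat -> R) x y (zz : nat -> R) :
  (a < k)%N ->
  (forall i, (i <= k)%N -> H i = if i == a then x else if i == k then y
                                 else if (a < i)%N then zz i else 1) ->
  \prod_(i < k.+1) H i = x * y * \prod_(a.+1 <= i < k) zz i.
Proof.
move=> ak HH.
rewrite big_ord_recr /= HH // eqxx.
have -> : (k == a) = false by apply/eqP; lia.
rewrite -(big_mkord xpredT) (@big_cat_nat _ _ _ a 0 k _ _ (leq0n a) (ltnW ak)) /=.
rewrite big_nat_cond big1; last first.
  move=> i /andP [/andP [_ ia] _]; rewrite HH; last by lia.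
  have -> : (i == a) = false by apply/eqP; lia.
  have -> : (i == k) = false by apply/eqP; lia.
  by have -> : (a < i)%N = false by lia.
rewrite big_ltn // HH ?eqxx; last by lia.
rewrite (@eq_big_nat _ _ _ _ _ H zz); last first.
  move=> i /andP [ai ik]; rewrite HH; last by lia.
  have -> : (i == a) = false by apply/eqP; lia.
  have -> : (i == k) = false by apply/eqP; lia.
  by rewrite ai.
by rewrite mul1r mulrAC.
Qed.

Lemma prod_all (R : realFieldType) (P : pred nat) r :
  \prod_(i <- r) (P i)%:R = (all P r)%:R :> R.
Proof.
elim: r => [|x r IH]; first by rewrite big_nil.
by rewrite big_cons IH /=; case: (P x); rewrite /= ?mul1r ?mul0r.
Qed.

Lemma sum_ind (R : realFieldType) (a b c : nat) (g : nat -> R) : (a <= c < b)%N ->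
  \sum_(a <= m < b) (c == m)%:R * g m = g c.
Proof.
move=> Hc.
rewrite (bigD1_seq c) ?mem_index_iota ?iota_uniq //= eqxx mul1r big1 ?addr0 //.
by move=> i; rewrite eq_sym => /negbTE ->; rewrite mul0r.
Qed.

Section Main.
Variables (R : realFieldType) (T k : nat) (p : nat -> R).

Definition unc (f : {ffun 'I_k.+1 -> {ffun 'I_T -> bool}}) : outcome k T :=
  [ffun s => f s.1 s.2].
Definition cur (w : outcome k T) : {ffun 'I_k.+1 -> {ffun 'I_T -> bool}} :=
  [ffun i => [ffun j => w (i, j)]].
Lemma uncK : cancel cur unc.
Proof. by move=> w; apply/ffunP => [[i j]]; rewrite !ffunE. Qed.
Lemma curK : cancel unc cur.
Proof. by move=> f; apply/ffunP => i; apply/ffunP => j; rewrite !ffunE. Qed.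

Lemma sum_unc (G : outcome k T -> R) :
  \sum_(w : outcome k T) G w = \sum_(f : {ffun 'I_k.+1 -> {ffun 'I_T -> bool}}) G (unc f).
Proof. by rewrite (reindex unc) //; apply: onW_bij; exact: (Bijective curK uncK). Qed.

Lemma weight_unc f : weight p (unc f) = \prod_(i : 'I_k.+1) bw (pb p i) (f i).
Proof.
rewrite /weight.
transitivity (\prod_(i : 'I_k.+1) \prod_(j : 'I_T) (if f i j then pb p i else qb p i)).
  by rewrite pair_big /=; apply: eq_bigr => [[i j]] _; rewrite ffunE.
by apply: eq_bigr => i _.
Qed.

Definition z (f : {ffun 'I_k.+1 -> {ffun 'I_T -> bool}}) (i : nat) := Zf (f (inord i)).

Lemma Zb_unc f i : Zb (unc f) i = z f i.
Proof. by rewrite /Zb /z /Zf; apply: eq_existsb => j; rewrite ffunE. Qed.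
Lemma Xb_unc f i : Xb (unc f) i = Xf (f (inord i)).
Proof. by rewrite /Xb /Xf /blk; congr find; apply: eq_map => j; rewrite ffunE. Qed.
Lemma Wb_unc f i : Wb (unc f) i = Wf (f (inord i)).
Proof. by rewrite /Wb /Wf /blk; congr (find _ (rev _)); apply: eq_map => j; rewrite ffunE. Qed.

Lemma kappa_unc f : kappa (unc f) = (find id [seq z f (k - m) | m <- iota 1 k.-1]).+1.
Proof. by rewrite /kappa; congr (find _ _).+1; apply: eq_map => m; rewrite Zb_unc. Qed.


Definition Gm (A Bf : {ffun 'I_T -> bool} -> R) (m i : nat) (b : {ffun 'I_T -> bool}) : R :=
  if i == (k - m)%N then (Zf b)%:R * A b else if i == k then (Zf b)%:R * Bf b
  else if (k - m < i)%N then (~~ Zf b)%:R else 1.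

Definition one (b : {ffun 'I_T -> bool}) : R := 1.
Definition Wr (b : {ffun 'I_T -> bool}) : R := (Wf b)%:R.
Definition Xr (b : {ffun 'I_T -> bool}) : R := (Xf b)%:R.

Lemma kappa_eq f m : (1 <= m <= k)%N -> z f 0 ->
  (kappa (unc f) == m) = z f (k - m)%N && all (fun i => ~~ z f i) (iota (k - m)%N.+1 (k - (k - m)%N.+1)%N).
Proof.
move=> /andP [m1 mk] z0; rewrite kappa_unc.
case: m m1 mk => // m _ mk.
rewrite eqSS find_eq; last by rewrite size_map size_iota; lia.
congr (_ && _).
  case: (ltnP m k.-1) => hm.
    rewrite (nth_map 0%N) ?size_iota // nth_iota //; congr (z f _); lia.
  rewrite nth_default ?size_map ?size_iota //.
  by rewrite (_ : k - m.+1 = 0)%N //; lia.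
transitivity (all (fun i => ~~ z f (k - i.+1)%N) (iota 0 m)).
  apply: eq_in_all => i; rewrite mem_iota => /andP [_ im].
  rewrite (nth_map 0%N) ?size_iota ?nth_iota; try lia.
  by rewrite add1n.
apply/allP/allP => H i; rewrite mem_iota => /andP [h1 h2].
  have := H (k - i.+1)%N; rewrite mem_iota.
  rewrite (_ : k - (k - i.+1)%N.+1 = i)%N; last by lia.
  apply; lia.
have := H (k - i.+1)%N; rewrite mem_iota.
apply; lia.
Qed.

Lemma prodG A Bf f m : (1 <= m <= k)%N -> z f 0 ->
  \prod_(i < k.+1) Gm A Bf m i (f i) =
  (kappa (unc f) == m)%:R * (z f k)%:R * A (f (inord (k - m)%N)) * Bf (f (inord k)).
Proof.
move=> Hm z0.
transitivity (\prod_(i < k.+1) Gm A Bf m i (f (inord i))).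
  by apply: eq_bigr => i _; rewrite inord_val.
rewrite (@prod_shape R (k - m)%N k (fun i => Gm A Bf m i (f (inord i)))
   ((z f (k - m)%N)%:R * A (f (inord (k - m)%N))) ((z f k)%:R * Bf (f (inord k)))
   (fun i => (~~ z f i)%:R)); last first.
- move=> i _; rewrite /Gm /z.
  by case: (i =P (k - m)%N) => [->|_] //; case: (i =P k) => [->|_].
- by lia.
rewrite prod_all /index_iota kappa_eq //.
case: (z f (k - m)%N); case: (all _ _); case: (z f k); rewrite /= ?mulr1n ?mulr0n; ring.
Qed.

Lemma weight0 f : (0 < T)%N -> ~~ z f 0 -> weight p (unc f) = 0.
Proof.
move=> hT nz; rewrite weight_unc (bigD1 ord0) //=.
have -> : bw (pb p 0) (f ord0) = 0; last by rewrite mul0r.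
rewrite /bw (bigD1 (Ordinal hT)) //=.
have -> : f ord0 (Ordinal hT) = false.
  move: nz; rewrite /z /Zf.
  have -> : inord 0 = ord0 :> 'I_k.+1 by apply: val_inj; rewrite /= inordK.
  by move/existsPn => H; exact/negbTE/H.
by rewrite /pb /= subrr mul0r.
Qed.

Lemma factor (U V : 'I_k.+1 -> {ffun 'I_T -> bool} -> R) :
  \sum_(f : {ffun 'I_k.+1 -> {ffun 'I_T -> bool}}) (\prod_i U i (f i)) * (\prod_i V i (f i)) =
  \prod_i \sum_(b : {ffun 'I_T -> bool}) U i b * V i b.
Proof. by rewrite bigA_distr_bigA; apply: eq_bigr => f _; rewrite -big_split. Qed.

Lemma kappa_bound f : (0 < k)%N -> (1 <= kappa (unc f) <= k)%N.
Proof.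
move=> hk; rewrite kappa_unc.
have := find_size id [seq z f (k - m)%N | m <- iota 1 k.-1].
rewrite size_map size_iota; lia.
Qed.

Lemma Lsum f : (0 < k)%N -> z f 0 ->
  (z f k)%:R * (peak_latency (unc f))%:R =
  \sum_(1 <= m < k.+1) ((T * m.-1 + 1)%N%:R * \prod_(i < k.+1) Gm one one m i (f i)
      + \prod_(i < k.+1) Gm Wr one m i (f i) + \prod_(i < k.+1) Gm one Xr m i (f i)).
Proof.
move=> hk z0.
rewrite (@eq_big_nat _ _ _ _ _ _ (fun m => (kappa (unc f) == m)%:R * ((z f k)%:R *
   ((T * m.-1 + 1)%N%:R + (Wf (f (inord (k - m)%N)))%:R + (Xf (f (inord k)))%:R)))); last first.
  by move=> m Hm; rewrite !prodG // /one /Wr /Xr; ring.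
rewrite sum_ind; last by have := kappa_bound f hk; lia.
by rewrite /peak_latency Wb_unc Xb_unc !natrD; ring.
Qed.


Definition Ep A Bf m := \prod_(i < k.+1) \sum_(b : {ffun 'I_T -> bool}) bw (pb p i) b * Gm A Bf m i b.

Lemma num : (0 < T)%N -> (0 < k)%N ->
  \sum_(w : outcome k T | Zb w k) weight p w * (peak_latency w)%:R =
  \sum_(1 <= m < k.+1) ((T * m.-1 + 1)%N%:R * Ep one one m + Ep Wr one m + Ep one Xr m).
Proof.
move=> hT hk.
rewrite big_mkcond /= sum_unc.
transitivity (\sum_(f : {ffun 'I_k.+1 -> {ffun 'I_T -> bool}}) \sum_(1 <= m < k.+1)
   ((T * m.-1 + 1)%N%:R * ((\prod_(i : 'I_k.+1) bw (pb p i) (f i)) * \prod_(i < k.+1) Gm one one m i (f i))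
    + (\prod_(i : 'I_k.+1) bw (pb p i) (f i)) * \prod_(i < k.+1) Gm Wr one m i (f i)
    + (\prod_(i : 'I_k.+1) bw (pb p i) (f i)) * \prod_(i < k.+1) Gm one Xr m i (f i))).
  apply: eq_bigr => f _.
  rewrite Zb_unc.
  case: (boolP (z f 0)) => z0.
    transitivity (weight p (unc f) * ((z f k)%:R * (peak_latency (unc f))%:R)).
      by case: (z f k); rewrite /= ?mul1r ?mul0r ?mulr0.
    by rewrite Lsum // mulr_sumr weight_unc; apply: eq_big_nat => m _; ring.
  have W0 := weight0 hT z0; rewrite weight_unc in W0.
  rewrite -weight_unc weight0 // mul0r if_same.
  by rewrite big1 // => m _; ring.
rewrite exchange_big; apply: eq_big_nat => m Hm.
rewrite !big_split /= -mulr_sumr.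
by rewrite /Ep -!factor.
Qed.

Lemma Ep_eval A Bf m : (1 <= m <= k)%N ->
  Ep A Bf m = (\sum_(b : {ffun 'I_T -> bool}) bw (pb p (k - m)%N) b * ((Zf b)%:R * A b))
            * (\sum_(b : {ffun 'I_T -> bool}) bw (pb p k) b * ((Zf b)%:R * Bf b))
            * \prod_((k - m)%N.+1 <= i < k) qb p i ^+ T.
Proof.
move=> Hm; rewrite /Ep.
apply: (@prod_shape R (k - m)%N k (fun i : nat => \sum_(b : {ffun 'I_T -> bool}) bw (pb p i) b * Gm A Bf m i b)); first by lia.
move=> i ik.
case: (i =P (k - m)%N) => [->|ne].
  by rewrite /Gm eqxx.
have ne' : (i == (k - m)%N) = false by apply/eqP.
case: (i =P k) => [->|ne2].
  rewrite /Gm; have -> : (k == (k - m)%N) = false by apply/eqP; lia.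
  by rewrite eqxx.
have ne2' : (i == k) = false by apply/eqP.
rewrite /Gm ne' ne2'; case: ifP => _.
  by rewrite ENZ.
under eq_bigr do rewrite mulr1.
exact: E1.
Qed.

Lemma den : (0 < k)%N -> \sum_(w : outcome k T | Zb w k) weight p w = 1 - qb p k ^+ T.
Proof.
move=> hk.
rewrite big_mkcond /= sum_unc.
transitivity (\sum_(f : {ffun 'I_k.+1 -> {ffun 'I_T -> bool}}) (\prod_(i : 'I_k.+1) bw (pb p i) (f i)) *
   \prod_(i : 'I_k.+1) (fun (i : 'I_k.+1) (b : {ffun 'I_T -> bool}) => if i == k :> nat then (Zf b)%:R else (1:R)) i (f i)).
  apply: eq_bigr => f _.
  have HV : \prod_(i : 'I_k.+1) (fun (i : 'I_k.+1) (b : {ffun 'I_T -> bool}) => if i == k :> nat then (Zf b)%:R else (1:R)) i (f i) = (z f k)%:R.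
    rewrite big_ord_recr /= eqxx big1; last first.
      move=> i _; rewrite (_ : (widen_ord _ i == k :> nat) = false) //.
      by apply/eqP => /= E; have := ltn_ord i; lia.
    by rewrite mul1r /z (_ : inord k = ord_max) //; apply: val_inj; rewrite /= inordK.
  rewrite HV Zb_unc weight_unc.
  by case: (z f k); rewrite /= ?mulr1 ?mulr0.
rewrite (factor (fun (i : 'I_k.+1) b => bw (pb p i) b) (fun (i : 'I_k.+1) (b : {ffun 'I_T -> bool}) => if i == k :> nat then (Zf b)%:R else (1:R))) big_ord_recr /= big1; last first.
  move=> i _; have -> : (i == k :> nat) = false by apply/eqP => /= E; have := ltn_ord i; lia.
  under eq_bigr do rewrite mulr1.
  exact: E1.
by rewrite mul1r eqxx EZ /qb.
Qed.

End Main.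


Lemma tele_lem (R : realFieldType) (k : nat) (Q : nat -> R) : (0 < k)%N -> Q 0%N = 0 ->
  \sum_(1 <= m < k.+1) (1 - Q (k - m)%N) * \prod_((k - m)%N.+1 <= i < k) Q i = 1.
Proof.
move=> hk Q0.
pose g m := \prod_((k - m)%N <= i < k) Q i.
transitivity (\sum_(1 <= m < k.+1) (g m.-1 - g m)).
  apply: eq_big_nat => m /andP [m1 mk]; rewrite /g (@big_ltn _ _ _ (k - m)%N); last by lia.
  rewrite (_ : (k - m.-1)%N = (k - m).+1)%N; last by lia.
  ring.
rewrite big_add1 /=.
rewrite (@eq_big_nat _ _ _ _ _ _ (fun m => - (g m.+1 - g m))); last by move=> m _; rewrite opprB.
by rewrite sumrN telescope_sumr // opprB /g subn0 subnn big_geq // big_ltn // Q0 mul0r subr0.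
Qed.

Lemma EZ1 (R : realFieldType) (T : nat) (a : R) :
  \sum_(b : {ffun 'I_T -> bool}) bw a b * ((Zf b)%:R * 1) = 1 - (1 - a) ^+ T.
Proof. under eq_bigr do rewrite mulr1. exact: EZ. Qed.

Lemma geo (R : realFieldType) (T : nat) (a : R) : a != 0 ->
  \sum_(x < T) (1 - a) ^+ x.+1 = (1 - (1 - a) ^+ T) * ((1 - a) / a).
Proof.
move=> anz.
rewrite (eq_bigr (fun x : 'I_T => (1 - a) * (1 - a) ^+ x)); last by move=> x _; rewrite exprS.
rewrite -mulr_sumr.
have H := subrX1 (1 - a) T.
have -> : 1 - (1 - a) ^+ T = a * \sum_(i < T) (1 - a) ^+ i.
  by rewrite -opprB H; ring.
by field.
Qed.

Theorem theorem2 (R : realFieldType) (T k : nat) (p : nat -> R)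
  (hT : (0 < T)%N) (hk : (0 < k)%N)
  (hp : forall i : nat, (1 <= i <= k)%N -> 0 < p i <= 1) :
  Theta_pl p k T =
    \sum_(1 <= kap < k.+1)
        (1 - qb p (k - kap) ^+ T)
        * (\prod_((k - kap).+1 <= i < k) qb p i ^+ T)
        * (qb p (k - kap) / pb p (k - kap) + T%:R * kap%:R)
    - T%:R * (\sum_(1 <= kap < k.+1) \prod_(k - kap <= i < k) qb p i ^+ T)
    - T%:R
    + (qb p k / pb p k - T%:R * qb p k ^+ T / (1 - qb p k ^+ T))
    + 1.
Proof.
have pbnz : forall j, (j <= k)%N -> pb p j != 0.
  move=> j jk; rewrite /pb; case: ifP => [_|/eqP j0]; first exact: oner_neq0.
  have /andP [h _] := hp j ltac:(lia).
  by rewrite gt_eqF.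
have Dnz : 1 - (1 - pb p k) ^+ T != 0.
  have /andP [h1 h2] := hp k ltac:(lia).
  rewrite /pb ifF; last by apply/eqP; lia.
  rewrite subr_eq0 eq_sym lt_eqF // exprn_ilt1 ?subr_ge0 ?gtrDl ?oppr_lt0 //.
  by rewrite -lt0n.
rewrite /Theta_pl num // den // /qb.
transitivity ((\sum_(1 <= m < k.+1) ((T * m.-1 + 1)%N%:R * ((1 - (1 - pb p (k - m)%N) ^+ T) * (1 - (1 - pb p k) ^+ T) * (\prod_((k - m)%N.+1 <= i < k) (1 - pb p i) ^+ T))
        + ((1 - (1 - pb p (k - m)%N) ^+ T) * ((1 - pb p (k - m)%N) / pb p (k - m)%N) - T%:R * (1 - pb p (k - m)%N) ^+ T) * (1 - (1 - pb p k) ^+ T) * (\prod_((k - m)%N.+1 <= i < k) (1 - pb p i) ^+ T)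
        + (1 - (1 - pb p (k - m)%N) ^+ T) * ((1 - (1 - pb p k) ^+ T) * ((1 - pb p k) / pb p k) - T%:R * (1 - pb p k) ^+ T) * (\prod_((k - m)%N.+1 <= i < k) (1 - pb p i) ^+ T))) / (1 - (1 - pb p k) ^+ T)).
  congr (_ / _); apply: eq_big_nat => m Hm.
  rewrite !Ep_eval // /one /Wr /Xr /qb EZ1 EZ1 EZW EZX !geo; try (apply: pbnz; lia).
  ring.
transitivity ((\sum_(1 <= m < k.+1) ((1 - (1 - pb p k) ^+ T) * ((1 - (1 - pb p (k - m)%N) ^+ T) * (\prod_((k - m)%N.+1 <= i < k) (1 - pb p i) ^+ T) * (((1 - pb p (k - m)%N) / pb p (k - m)%N) + T%:R * m%:R) - T%:R * ((1 - pb p (k - m)%N) ^+ T * (\prod_((k - m)%N.+1 <= i < k) (1 - pb p i) ^+ T)) + (1 - T%:R) * ((1 - (1 - pb p (k - m)%N) ^+ T) * (\prod_((k - m)%N.+1 <= i < k) (1 - pb p i) ^+ T)))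
        + ((1 - (1 - pb p k) ^+ T) * ((1 - pb p k) / pb p k) - T%:R * (1 - pb p k) ^+ T) * ((1 - (1 - pb p (k - m)%N) ^+ T) * (\prod_((k - m)%N.+1 <= i < k) (1 - pb p i) ^+ T)))) / (1 - (1 - pb p k) ^+ T)).
  congr (_ / _); apply: eq_big_nat => m /andP [m1 _].
  have cmE : (T * m.-1 + 1)%N%:R = T%:R * m%:R - T%:R + 1 :> R.
    by case: m m1 => // m _; rewrite /= natrD natrM -addn1 natrD; ring.
  rewrite cmE; ring.
have tele := @tele_lem R k (fun j => (1 - pb p j) ^+ T) hk.
rewrite /= in tele.
have Q0 : (1 - pb p 0) ^+ T = 0 by rewrite /pb eqxx subrr expr0n eqn0Ngt hT.
rewrite big_split /= -mulr_sumr -mulr_sumr tele // mulr1.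
rewrite big_split /= sumrB -mulr_sumr -mulr_sumr tele // mulr1.
have Dsplit : (\sum_(1 <= m < k.+1) \prod_((k - m)%N <= i < k) (1 - pb p i) ^+ T) = (\sum_(1 <= m < k.+1) (1 - pb p (k - m)%N) ^+ T * (\prod_((k - m)%N.+1 <= i < k) (1 - pb p i) ^+ T)).
  apply: eq_big_nat => m /andP [m1 mk]; rewrite big_ltn //; lia.
rewrite Dsplit.
field.
by rewrite Dnz /=; apply: pbnz.
Qed.
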